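(* Let $N=2m+1$ be an odd integer with $N\ge3$. There exist $\varphi,\psi\in\mathbb{C}^N$ such that there is no $c\in\mathbb{C}$ with $|c|=1$ and $\psi=c\varphi$, while for all $k=0,\ldots,2N-3$, $$\Big|P_\varphi\Big(\tfrac{k}{2N-2}\Big)\Big|=\Big|P_\psi\Big(\tfrac{k}{2N-2}\Big)\Big|\quad\text{and}\quad\Big|P_\varphi'\Big(\tfrac{k}{2N-2}\Big)\Big|=\Big|P_\psi'\Big(\tfrac{k}{2N-2}\Big)\Big|.$$
   Context: For $\psi=(\psi_0,\ldots,\psi_{N-1})\in\mathbb{C}^N$, $P_\psi(x)=\sum_{j=0}^{N-1}\psi_je^{2i\pi jx}$ for $x\in\mathbb{R}$, and $P_\psi'$ denotes its derivative in $x$. *)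

(* Defs.v *)
From Stdlib Require Import Reals.
From Coquelicot Require Import Coquelicot.
Open Scope R_scope.

Definition expi (t : R) : C := (cos t, sin t).

(* P_psi(x) = sum_{j=0}^{N-1} psi_j e^{2 i pi j x}; a vector of C^N is
   represented by psi : nat -> C, only indices j < N being relevant. *)
Definition Ppoly (N : nat) (psi : nat -> C) (x : R) : C :=
  sum_n (fun j => Cmult (psi j) (expi (2 * PI * INR j * x))) (N - 1).

(* Main.v *)
Require Import Defs.
From Stdlib Require Import Reals Lra Lia.
From Coquelicot Require Import Coquelicot.
Open Scope R_scope.

Lemma sum3 (m:nat) (F: nat -> C) : (1<=m)%nat ->
  (forall j, j<>0%nat -> j<>m -> j<>(2*m)%nat -> F j = RtoC 0) -> forall n,
  sum_n F n = Cplus (Cplus (F 0%nat) (if (m <=? n)%nat then F m else RtoC 0))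
                    (if (2*m <=? n)%nat then F (2*m)%nat else RtoC 0).
Proof.
  intros Hm HF n. induction n.
  - rewrite sum_O. destruct (m <=? 0)%nat eqn:E1; [apply Nat.leb_le in E1; lia|].
    destruct (2*m <=? 0)%nat eqn:E2; [apply Nat.leb_le in E2; lia|]. match goal with |- ?a = ?b => change (@eq C a b) end; ring.
  - rewrite sum_Sn, IHn. change plus with Cplus; match goal with |- ?a = ?b => change (@eq C a b) end.
    destruct (m <=? n)%nat eqn:E1; destruct (m <=? S n)%nat eqn:E2;
    destruct (2*m <=? n)%nat eqn:E3; destruct (2*m <=? S n)%nat eqn:E4;
    repeat match goal with H : (_ <=? _)%nat = true |- _ => apply Nat.leb_le in H
      | H : (_ <=? _)%nat = false |- _ => apply Nat.leb_gt in H end;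
    try lia.
    all: first [rewrite (HF (S n)) by lia; ring | replace (S n) with (2*m)%nat by lia; ring | replace (S n) with m by lia; ring].

Qed.

Definition tri (m : nat) (a b c : C) : nat -> C := fun j =>
  if (j =? 0)%nat then a else if (j =? m)%nat then b
  else if (j =? 2*m)%nat then c else RtoC 0.

Definition G (m : nat) (a b c : C) (t : R) : C :=
  Cplus (Cplus a (Cmult b (expi (2*PI*INR m*t)))) (Cmult c (expi (2*PI*INR (2*m)*t))).

Lemma Ppoly_tri m N a b c t : N = (2*m+1)%nat -> (1 <= m)%nat ->
  Ppoly N (tri m a b c) t = G m a b c t.
Proof.
  intros HN Hm. unfold Ppoly. replace (N-1)%nat with (2*m)%nat by lia.
  rewrite (sum3 m) by (first [lia | intros j H1 H2 H3; unfold tri;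
    destruct (j =? 0)%nat eqn:E1; [apply Nat.eqb_eq in E1; lia|];
    destruct (j =? m)%nat eqn:E2; [apply Nat.eqb_eq in E2; lia|];
    destruct (j =? 2*m)%nat eqn:E3; [apply Nat.eqb_eq in E3; lia|]; ring]).
  replace (m <=? 2*m)%nat with true by (symmetry; apply Nat.leb_le; lia).
  replace (2*m <=? 2*m)%nat with true by (symmetry; apply Nat.leb_le; lia).
  unfold tri, G. simpl (0 =? 0)%nat.
  replace (m =? 0)%nat with false by (symmetry; apply Nat.eqb_neq; lia).
  rewrite Nat.eqb_refl.
  replace (2*m =? 0)%nat with false by (symmetry; apply Nat.eqb_neq; lia).
  replace (2*m =? m)%nat with false by (symmetry; apply Nat.eqb_neq; lia).
  rewrite Nat.eqb_refl.
  replace (expi (2 * PI * INR 0 * t)) with (RtoC 1).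
  2:{ unfold expi. simpl INR. rewrite Rmult_0_r, Rmult_0_l, cos_0, sin_0. reflexivity. }
  ring.
Qed.

Notation PNM := (prod_NormedModule R_AbsRing R_NormedModule R_NormedModule).

Lemma is_derive_pair (f g : R -> R) (x df dg : R) : is_derive f x df -> is_derive g x dg ->
  @is_derive R_AbsRing PNM (fun t => ((f t, g t) : C)) x ((df, dg) : C).
Proof.
  intros Hf Hg.
  eapply is_derive_ext.
  2:{ replace ((df,dg) : C) with (@plus PNM (@scal R_AbsRing PNM df ((1,0):C)) (@scal R_AbsRing PNM dg ((0,1):C))).
      apply (@is_derive_plus R_AbsRing PNM); apply (@is_derive_scal_l R_AbsRing PNM); eassumption.
      apply injective_projections; simpl;
      unfold prod_plus, prod_scal, plus, scal, mult; simpl; unfold mult; simpl; ring. }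
  intros t. simpl. apply injective_projections; simpl;
      unfold prod_plus, prod_scal, plus, scal, mult; simpl; unfold mult; simpl; ring.
Qed.

Definition D (m : nat) (b c : C) (x : R) : C :=
  Cplus (Cmult b (Cmult (0, 2*PI*INR m) (expi (2*PI*INR m*x))))
        (Cmult c (Cmult (0, 2*PI*INR (2*m)) (expi (2*PI*INR (2*m)*x)))).

Lemma deriv_tri m N a b c x : N = (2*m+1)%nat -> (1 <= m)%nat ->
  @is_derive R_AbsRing PNM (Ppoly N (tri m a b c)) x (D m b c x).
Proof.
  intros HN Hm.
  apply is_derive_ext with (f := fun t => ((fst (G m a b c t), snd (G m a b c t)) : C)).
  { intros t. rewrite Ppoly_tri by auto. destruct (G m a b c t); reflexivity. }
  destruct a as [a1 a2], b as [b1 b2], c as [c1 c2].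
  unfold G, D, expi, Cmult, Cplus. simpl.
  apply is_derive_pair; auto_derive; auto; ring.
Qed.

Lemma cs_cases (C S : R) : C * S = 0 -> C*C + S*S = 1 ->
  (C = 1 /\ S = 0) \/ (C = -1 /\ S = 0) \/ (C = 0 /\ S = 1) \/ (C = 0 /\ S = -1).
Proof.
  intros H1 H2. destruct (Rmult_integral _ _ H1) as [HC|HS].
  - subst. assert ((S-1)*(S+1) = 0) by nra.
    destruct (Rmult_integral _ _ H) as [h|h]; [right;right;left|right;right;right]; split; lra.
  - subst. assert ((C-1)*(C+1) = 0) by nra.
    destruct (Rmult_integral _ _ H) as [h|h]; [left|right;left]; split; lra.
Qed.

Theorem mainTheorem11 (m : nat) (N : nat) (HN : N = (2 * m + 1)%nat) (H3 : (3 <= N)%nat) :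
  exists phi psi : nat -> C,
    ~ (exists c : C, Cmod c = 1 /\ forall j : nat, (j < N)%nat -> psi j = Cmult c (phi j)) /\
    forall k : nat, (k <= 2 * N - 3)%nat ->
      let x := INR k / INR (2 * N - 2) in
      Cmod (Ppoly N phi x) = Cmod (Ppoly N psi x) /\
      exists dphi dpsi : C,
        is_derive (Ppoly N phi) x dphi /\ is_derive (Ppoly N psi) x dpsi /\
        Cmod dphi = Cmod dpsi.
Proof.
  assert (Hm : (1 <= m)%nat) by lia.
  set (s := sqrt 3).
  assert (Hs : s * s = 3) by (apply sqrt_sqrt; lra).
  exists (tri m (0, s) (4, 0) (1, 0)), (tri m (0, 2*s) (2, 0) (2, 0)). split.
  - intros [[c1 c2] [Hc Hj]].
    specialize (Hj (2*m)%nat ltac:(lia)). unfold tri in Hj.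
    replace (2*m =? 0)%nat with false in Hj by (symmetry; apply Nat.eqb_neq; lia).
    replace (2*m =? m)%nat with false in Hj by (symmetry; apply Nat.eqb_neq; lia).
    rewrite Nat.eqb_refl in Hj. unfold Cmult in Hj. simpl in Hj.
    injection Hj as h1 h2.
    unfold Cmod in Hc.
    pose proof (sqrt_sqrt (fst ((c1, c2):C) ^ 2 + snd ((c1, c2):C) ^ 2) ltac:(simpl; nra)) as Q.
    rewrite Hc in Q. simpl in Q.
    nra.
  - intros k Hk x.
    assert (Hmpos : 0 < INR m) by (apply lt_0_INR; lia).
    set (th := PI * INR k / 2).
    assert (E1 : 2 * PI * INR m * x = th).
    { unfold x, th. replace (2*N-2)%nat with (4*m)%nat by lia.
      rewrite mult_INR. simpl (INR 4). field. lra. }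
    assert (E2 : 2 * PI * INR (2*m) * x = 2 * th).
    { rewrite mult_INR. simpl (INR 2). rewrite <- E1. ring. }
    assert (Hsin : sin th * cos th = 0).
    { assert (sin (2*th) = 0).
      { apply sin_eq_0_1. exists (Z.of_nat k). rewrite <- INR_IZR_INZ. unfold th. field. }
      rewrite sin_2a in H. lra. }
    assert (Hcs : cos th * cos th + sin th * sin th = 1).
    { pose proof (sin2_cos2 th). unfold Rsqr in H. lra. }
    rewrite !Ppoly_tri by auto. split; [|exists (D m (4,0) (1,0) x), (D m (2,0) (2,0) x); split; [|split]].
    + unfold G. rewrite E1, E2. unfold expi. rewrite cos_2a, sin_2a.
      destruct (cs_cases (cos th) (sin th)) as [[h1 h2]|[[h1 h2]|[[h1 h2]|[h1 h2]]]];
      try nra; rewrite h1, h2; unfold Cmod, Cmult, Cplus; simpl; f_equal; nra.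
    + apply deriv_tri; auto.
    + apply deriv_tri; auto.
    + unfold D. rewrite E1, E2, mult_INR. unfold expi. rewrite cos_2a, sin_2a.
      destruct (cs_cases (cos th) (sin th)) as [[h1 h2]|[[h1 h2]|[[h1 h2]|[h1 h2]]]];
      try nra; rewrite h1, h2; unfold Cmod, Cmult, Cplus; simpl; f_equal; ring.
Qed.
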